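(* Let $(C,\mathfrak p,\mathfrak d)$ be a regular $q$-cycle coalgebra and let $s\ge1$ be an integer such that $(\mathfrak p_{10}^1)^r\ne1$ for all $0<r<s$. Then $\mathfrak p_{ij}^k=\mathfrak d_{ij}^k=0$ whenever $i,j\ne0$ and $i+j\le s$ (with $0\le i,j,k\le n-1$). Moreover, the formula $$\mathfrak d_{i0}^1\bigl(\mathfrak p_{10}^1-\mathfrak p_{i0}^i\bigr)=\sum_{h=1}^{i-1}\mathfrak p_{i0}^h\mathfrak d_{h0}^1-\sum_{h=2}^{i}\mathfrak d_{i0}^h\mathfrak p_{h0}^1$$ defines recursively $\mathfrak d_{i0}^1$ for $1<i\le s$ (with $i\le n-1$).
   Context: $K$ is an algebraically closed field of characteristic $0$ and $n\ge2$. $C$ is the coalgebra dual to $K[y]/\langle y^n\rangle$: basis $x_0,\dots,x_{n-1}$, $\Delta(x_i)=\sum_{j+k=i}x_j\otimes x_k$, $\epsilon(x_i)=\delta_{i0}$; $C\otimes C$ has the tensor product coalgebra structure; Sweedler notation $\Delta(b)=b_{(1)}\otimes b_{(2)}$. For linear maps $\mathfrak p,\mathfrak d\colon C\otimes C\to C$ write $a\cdot b=\mathfrak p(a\otimes b)$, $a:b=\mathfrak d(a\otimes b)$, $\mathfrak p(x_i\otimes x_j)=\sum_{k=0}^{n-1}\mathfrak p_{ij}^kx_k$, $\mathfrak d(x_i\otimes x_j)=\sum_{k=0}^{n-1}\mathfrak d_{ij}^kx_k$. A triple $(C,\mathfrak p,\mathfrak d)$ with $\mathfrak p,\mathfrak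 d$ coalgebra morphisms is a regular $q$-magma coalgebra if there are coalgebra morphisms $a\otimes b\mapsto a^b$, $a\otimes b\mapsto a_b$ from $C\otimes C$ to $C$ with $a^{b_{(1)}}\cdot b_{(2)}=(a\cdot b_{(1)})^{b_{(2)}}=\epsilon(b)a$ and $(a:b_{(2)})_{b_{(1)}}=a_{b_{(2)}}:b_{(1)}=\epsilon(b)a$. It is a regular $q$-cycle coalgebra if moreover for all $a,b,c$: (1) $(a\cdot b_{(1)})\cdot(c:b_{(2)})=(a\cdot c_{(2)})\cdot(b\cdot c_{(1)})$; (2) $(a\cdot b_{(1)}):(c\cdot b_{(2)})=(a:c_{(2)})\cdot(b:c_{(1)})$; (3) $(a:b_{(1)}):(c:b_{(2)})=(a:c_{(2)}):(b\cdot c_{(1)})$. *)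

(* Defs.v *)
From mathcomp Require Import all_boot all_order all_algebra.
Set Implicit Arguments. Unset Strict Implicit. Unset Printing Implicit Defensive.
Import GRing.Theory.
Local Open Scope ring_scope.

(* The coalgebra C dual to K[y]/<y^n>: an element of C is its coordinate
   vector on the basis x_0, ..., x_{n-1}; an element of C (x) C is its
   coordinate matrix on the basis x_a (x) x_b. *)
Section QCycle.
Variables (K : fieldType) (n : nat).

Definition vect := {ffun 'I_n -> K}.
Definition tens := {ffun 'I_n * 'I_n -> K}.

(* A linear map C (x) C -> C, given by its structure constants:
   m i j k is the coefficient of x_k in m(x_i (x) x_j)  (i.e. m_{ij}^k).
   Only indices < n are meaningful. *)
Definition lmap := nat -> nat -> nat -> K.

Definition bx (i : 'I_n) : vect := [ffun k => (k == i)%:R].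

Definition eps (u : vect) : K := \sum_(k < n | val k == 0%N) u k.

(* comultiplication: Delta(x_k) = sum_{a+b=k} x_a (x) x_b *)
Definition comul (u : vect) : tens :=
  [ffun ab : 'I_n * 'I_n => \sum_(k < n | val k == (val ab.1 + val ab.2)%N) u k].

Definition app (m : lmap) (u v : vect) : vect :=
  [ffun k : 'I_n => \sum_(i < n) \sum_(j < n) u i * v j * m i j k].

(* Sweedler sum: sum_(b) F(b_(1), b_(2)), for F bilinear *)
Definition sw (b : vect) (F : vect -> vect -> vect) : vect :=
  [ffun k => \sum_(b1 < n) \sum_(b2 < n) comul b (b1, b2) * F (bx b1) (bx b2) k].

Definition escal (b a : vect) : vect := [ffun k => eps b * a k].

(* m : C (x) C -> C is a coalgebra morphism, C (x) C carrying the tensor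
   product coalgebra structure (checked on pure tensors, which span). *)
Definition is_coalg_morph (m : lmap) : Prop :=
  forall a b : vect,
    comul (app m a b) =
      [ffun xy : 'I_n * 'I_n =>
        \sum_(a1 < n) \sum_(a2 < n) \sum_(b1 < n) \sum_(b2 < n)
          comul a (a1, a2) * comul b (b1, b2) *
          (app m (bx a1) (bx b1) xy.1 * app m (bx a2) (bx b2) xy.2)]
    /\ eps (app m a b) = eps a * eps b.

(* regular q-magma coalgebra; up a b = a^b, lo a b = a_b,
   app p a b = a . b, app d a b = a : b *)
Definition regular_qmagma (p d : lmap) : Prop :=
  is_coalg_morph p /\ is_coalg_morph d /\
  exists up lo : lmap, is_coalg_morph up /\ is_coalg_morph lo /\
    forall a b : vect,
      [/\ sw b (fun u v => app p (app up a u) v) = escal b a,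
          sw b (fun u v => app up (app p a u) v) = escal b a,
          sw b (fun u v => app lo (app d a v) u) = escal b a &
          sw b (fun u v => app d (app lo a v) u) = escal b a].

Definition regular_qcycle (p d : lmap) : Prop :=
  regular_qmagma p d /\
  forall a b c : vect,
    [/\ sw b (fun u v => app p (app p a u) (app d c v)) =
          sw c (fun u v => app p (app p a v) (app p b u)),
        sw b (fun u v => app d (app p a u) (app p c v)) =
          sw c (fun u v => app p (app d a v) (app d b u)) &
        sw b (fun u v => app d (app d a u) (app d c v)) =
          sw c (fun u v => app d (app d a v) (app p b u))].

End QCycle.

(* Main.v *)
Require Import Defs.
From mathcomp Require Import all_boot all_order all_algebra.
From mathcomp Require Import zify ring.
Import GRing.Theory.
Local Open Scope ring_scope.

Set Implicit Arguments. Unset Strict Implicit. Unset Printing Implicit Defensive.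


Lemma sum1 {K : fieldType} N (F : 'I_N -> K) i0 (h : (i0 < N)%N) :
  (forall i : 'I_N, val i != i0 -> F i = 0) -> \sum_i F i = F (Ordinal h).
Proof.
by move=> H; rewrite (bigD1 (Ordinal h)) //= big1 ?addr0.
Qed.

Lemma sum_le {K : fieldType} N i (H : nat -> K) : (i < N)%N ->
  \sum_(a < N) (a <= i)%N%:R * H a = \sum_(a < i.+1) H a.
Proof.
move=> hi; rewrite (big_ord_widen N H hi) [RHS]big_mkcond /=.
by apply: eq_bigr => a _; rewrite ltnS; case: leqP => _; rewrite ?mul1r ?mul0r.
Qed.

Lemma conv {K : fieldType} N i j (G : nat -> nat -> nat -> nat -> K) :
  (i < N)%N -> (j < N)%N ->
  \sum_(a1 < N) \sum_(a2 < N) \sum_(b1 < N) \sum_(b2 < N)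
    ((val a1 + val a2 == i)%N%:R * (val b1 + val b2 == j)%N%:R * G a1 b1 a2 b2)
  = \sum_(a < i.+1) \sum_(b < j.+1) G a b (i - a)%N (j - b)%N.
Proof.
move=> hi hj.
have e1 : forall a1 : 'I_N, \sum_(a2 < N) \sum_(b1 < N) \sum_(b2 < N)
    ((val a1 + val a2 == i)%N%:R * (val b1 + val b2 == j)%N%:R * G a1 b1 a2 b2)
   = (a1 <= i)%N%:R * \sum_(b1 < N) (b1 <= j)%N%:R * G a1 b1 (i - a1)%N (j - b1)%N.
  move=> a1; rewrite exchange_big /= big_distrr /=; apply: eq_bigr => b1 _.
  have hi' : (i - a1 < N)%N by lia.
  have hj' : (j - b1 < N)%N by lia.
  rewrite (sum1 hi') /=; last first.
    move=> a2 ne; apply: big1 => b2 _.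
    have -> : (a1 + a2 == i)%N = false by lia.
    by rewrite !mul0r.
  rewrite (@sum1 K N _ (j - b1) hj') /=; last first.
    move=> b2 ne.
    have -> : (b1 + b2 == j)%N = false by lia.
    by rewrite mulr0 mul0r.
  have -> : (a1 + (i - a1) == i)%N = (a1 <= i)%N by lia.
  have -> : (b1 + (j - b1) == j)%N = (b1 <= j)%N by lia.
  by rewrite mulrA.
rewrite (eq_bigr _ (fun a1 _ => e1 a1)) (sum_le (fun a => \sum_(b1 < N) (b1 <= j)%N%:R * G a b1 (i - a)%N (j - b1)%N) hi).
by apply: eq_bigr => a _; rewrite (sum_le (fun b => G a b (i - a)%N (j - b)%N) hj).
Qed.


Lemma sum1o {K : fieldType} N (F : 'I_N -> K) (i0 : 'I_N) :
  (forall i : 'I_N, i != i0 -> F i = 0) -> \sum_i F i = F i0.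
Proof. by move=> H; rewrite (bigD1 i0) //= big1 ?addr0. Qed.
Arguments sum1o {K N F} i0 _.

Lemma bxE {K : fieldType} {n} (i k : 'I_n) : bx K i k = (k == i)%:R.
Proof. by rewrite ffunE. Qed.

Lemma app_bx {K : fieldType} {n} (m : lmap K) (i j k : 'I_n) :
  app m (bx K i) (bx K j) k = m i j k.
Proof.
rewrite ffunE (sum1o i) => [|i' ne]; last first.
  by apply: big1 => j' _; rewrite bxE (negbTE ne) !mul0r.
rewrite (sum1o j) => [|j' ne]; last by rewrite bxE (bxE j) (negbTE ne) mulr0 mul0r.
by rewrite !bxE !eqxx !mul1r.
Qed.

Lemma comul_bx {K : fieldType} {n} (i : 'I_n) (ab : 'I_n * 'I_n) :
  comul (bx K i) ab = (val ab.1 + val ab.2 == val i)%N%:R.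
Proof.
rewrite ffunE big_mkcond (sum1o i) => [|k ne] /=; last by rewrite bxE (negbTE ne); case: ifP.
by rewrite bxE eqxx eq_sym; case: ifP.
Qed.

Lemma comul_nat {K : fieldType} {n} (u : vect K n) (ab : 'I_n * 'I_n) :
  comul u ab = \sum_(k < n) (val k == val ab.1 + val ab.2)%N%:R * u k.
Proof.
by rewrite ffunE big_mkcond; apply: eq_bigr => k _; case: ifP; rewrite ?mul1r ?mul0r.
Qed.

Lemma eps_bx {K : fieldType} {n} (i : 'I_n) : eps (bx K i) = (val i == 0)%N%:R.
Proof.
rewrite /eps big_mkcond (sum1o i) => [|k ne] /=; last by rewrite bxE (negbTE ne); case: ifP.
by rewrite bxE eqxx; case: ifP.
Qed.

Lemma eps_nat {K : fieldType} {n} (u : vect K n) (h : (0 < n)%N) :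
  eps u = u (Ordinal h).
Proof.
rewrite /eps big_mkcond (sum1 h) => [|k ne] //=.
by rewrite (negbTE ne).
Qed.

Lemma sum_delta_nat {K : fieldType} n (F : nat -> K) (s : nat) :
  \sum_(k < n) (val k == s)%N%:R * F k = if (s < n)%N then F s else 0.
Proof.
case: ifP => h.
  rewrite (sum1 h) => [|k ne] /=; first by rewrite eqxx mul1r.
  by rewrite (negbTE ne) mul0r.
move/negbT: h; rewrite -leqNgt => h.
apply: big1 => -[k hk] _ /=.
have -> : (k == s) = false by lia.
by rewrite mul0r.
Qed.

Lemma morph_coef {K : fieldType} {n} (m : lmap K) : (0 < n)%N -> is_coalg_morph n m ->
  (forall i j, (i < n)%N -> (j < n)%N -> m i j 0%N = ((i == 0) && (j == 0))%N%:R) /\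
  (forall i j x y, (i < n)%N -> (j < n)%N -> (x < n)%N -> (y < n)%N ->
     (if (x + y < n)%N then m i j (x + y)%N else 0) =
     \sum_(a < i.+1) \sum_(b < j.+1) m a b x * m (i - a)%N (j - b)%N y).
Proof.
move=> n0 H; split.
  move=> i j hi hj; have [_ e] := H (bx K (Ordinal hi)) (bx K (Ordinal hj)).
  move: e; rewrite !eps_bx (eps_nat _ n0) app_bx /= => ->.
  by case: (i == 0)%N; case: (j == 0)%N; rewrite ?mul1r ?mul0r.
move=> i j x y hi hj hx hy; have [e _] := H (bx K (Ordinal hi)) (bx K (Ordinal hj)).
have := congr1 (fun f : tens K n => f (Ordinal hx, Ordinal hy)) e; clear e.
rewrite /= comul_nat ffunE /=.
move=> e.
rewrite (eq_bigr (fun k : 'I_n => (val k == x+y)%N%:R * m i j k)) in e; last by move=> k _; rewrite app_bx.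
rewrite (sum_delta_nat n (fun k => m i j k)) in e; rewrite e.
under eq_bigr do under eq_bigr do under eq_bigr do under eq_bigr do rewrite !comul_bx !app_bx /=.
by rewrite (conv (fun a b a' b' => m a b x * m a' b' y)).
Qed.


Lemma cm_conv {K : fieldType} {n} (m : lmap K) : (0 < n)%N -> is_coalg_morph n m ->
  forall i j k, (i < n)%N -> (j < n)%N -> (k.+1 < n)%N ->
  m i j k.+1 = \sum_(a < i.+1) \sum_(b < j.+1) m a b 1%N * m (i - a)%N (j - b)%N k.
Proof.
move=> n0 H i j k hi hj hk; have [_ C] := morph_coef n0 H.
by rewrite -(C i j 1%N k hi hj) ?add1n ?hk //; lia.
Qed.

Lemma cm_0 {K : fieldType} {n} (m : lmap K) : (0 < n)%N -> is_coalg_morph n m ->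
  forall i j, (i < n)%N -> (j < n)%N -> m i j 0%N = ((i == 0) && (j == 0))%N%:R.
Proof. by move=> n0 H; have [C _] := morph_coef n0 H. Qed.

Lemma cm_001 {K : fieldType} {n} (m : lmap K) : (1 < n)%N -> is_coalg_morph n m ->
  m 0%N 0%N 1%N = 0.
Proof.
move=> n1 H; have n0 : (0 < n)%N by lia.
have pw : forall k, (k < n)%N -> m 0%N 0%N k = m 0%N 0%N 1%N ^+ k.
  elim=> [|k IH] hk; first by rewrite (cm_0 n0 H) ?expr0 //.
  rewrite (cm_conv n0 H) // !big_ord1 /= IH ?exprS //; lia.
have [_ C] := morph_coef n0 H.
have := C 0%N 0%N 1%N n.-1 n0 n0 n1 ltac:(lia).
have -> : (1 + n.-1 < n)%N = false by lia.
rewrite !big_ord1 /= subnn (pw n.-1); last by lia.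
move/esym/eqP; rewrite -exprS expf_eq0 => /andP[_ /eqP //].
Qed.

Lemma cm_deg {K : fieldType} {n} (m : lmap K) : (1 < n)%N -> is_coalg_morph n m ->
  forall k i j, (k < n)%N -> (i < n)%N -> (j < n)%N -> (i + j < k)%N -> m i j k = 0.
Proof.
move=> n1 H; have n0 : (0 < n)%N by lia.
elim=> [|k IH] i j hk hi hj hij; first by [].
rewrite (cm_conv n0 H) //; apply: big1 => -[a ha] _; apply: big1 => -[b hb] _ /=.
case: (boolP ((a == 0) && (b == 0))%N) => [/andP[/eqP -> /eqP ->]|nz].
  by rewrite (cm_001 n1 H) mul0r.
have ab : (0 < a + b)%N by rewrite lt0n addn_eq0.
rewrite (IH (i - a)%N (j - b)%N) ?mulr0 //; lia.
Qed.

Lemma cm_diag {K : fieldType} {n} (m : lmap K) : (1 < n)%N -> is_coalg_morph n m ->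
  forall k, (k < n)%N -> m k 0%N k = m 1%N 0%N 1%N ^+ k.
Proof.
move=> n1 H; have n0 : (0 < n)%N by lia.
elim=> [|k IH] hk; first by rewrite (cm_0 n0 H) ?expr0.
rewrite (cm_conv n0 H) //.
have h1 : (1 < k.+2)%N by lia.
rewrite (sum1 h1) /= => [|a ne]; last first.
  rewrite big_ord1 /=.
  case: (boolP (a == 0%N :> nat)) => [/eqP ->|a0]; first by rewrite (cm_001 n1 H) mul0r.
  rewrite (@cm_deg _ _ m n1 H k (k.+1 - a)%N (0 - 0)%N) ?mulr0 //; have := ltn_ord a; lia.
rewrite big_ord1 /= subn1 /= IH ?exprS //; lia.
Qed.

Lemma lin_sum {K : fieldType} {n} (m : lmap K) : (1 < n)%N -> is_coalg_morph n m ->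
  forall k, (k.+1 < n)%N ->
  m k 1%N k.+1 = (k.+1)%:R * m 1%N 0%N 1%N ^+ k * m 0%N 1%N 1%N ->
  \sum_(a < k.+2) \sum_(b < 2) m a b 1%N * m (k.+1 - a)%N (1 - b)%N k.+1
  = (k.+2)%:R * m 1%N 0%N 1%N ^+ k.+1 * m 0%N 1%N 1%N.
Proof.
move=> n1 H k hk hL.
under eq_bigr do rewrite big_ord_recl big_ord1 /=.
rewrite big_split /=.
have h1 : (1 < k.+2)%N by lia.
have h0 : (0 < k.+2)%N by lia.
rewrite (sum1 h1) /= => [|a ne]; last first.
  case: (boolP (a == 0%N :> nat)) => [/eqP ->|a0]; first by rewrite (cm_001 n1 H) mul0r.
  rewrite (@cm_deg _ _ m n1 H k.+1 (k.+1 - a)%N (1 - 0)%N) ?mulr0 //; have := ltn_ord a; lia.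
rewrite (sum1 h0) /= => [|a ne]; last first.
  rewrite (@cm_deg _ _ m n1 H k.+1 (k.+1 - a)%N (1 - 1)%N) ?mulr0 //; have := ltn_ord a; lia.
have -> : bump 0 0 = 1%N by [].
rewrite subn1 /= !subn0 subnn hL (cm_diag n1 H hk).
rewrite !exprS -[(k.+2)%:R]natr1 -[(k.+1)%:R]natr1; ring.
Qed.

Lemma cm_lin {K : fieldType} {n} (m : lmap K) : (1 < n)%N -> is_coalg_morph n m ->
  forall k, (k.+1 < n)%N ->
  m k 1%N k.+1 = (k.+1)%:R * m 1%N 0%N 1%N ^+ k * m 0%N 1%N 1%N.
Proof.
move=> n1 H; have n0 : (0 < n)%N by lia.
elim=> [|k IH] hk; first by rewrite expr0 !mul1r.
rewrite (cm_conv n0 H) //; last by lia.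
apply: (lin_sum n1 H); [lia | apply: IH; lia].
Qed.

Lemma cm_nil {K : fieldType} {n} (m : lmap K) : [pchar K] =i pred0 -> (1 < n)%N ->
  is_coalg_morph n m -> m 1%N 0%N 1%N != 0 -> m 0%N 1%N 1%N = 0.
Proof.
move=> ch n1 H q0; have n0 : (0 < n)%N by lia.
have [_ C] := morph_coef n0 H.
case: n n1 H n0 C => [|[|N]] // n1 H n0 C.
have := C N.+1 1%N 1%N N.+1 ltac:(lia) n1 n1 ltac:(lia).
have -> : (1 + N.+1 < N.+2)%N = false by lia.
rewrite (lin_sum n1 H) //; last by rewrite (cm_lin n1 H).
move/esym/eqP; rewrite !mulf_eq0 expf_eq0 (negbTE q0) andbF orbF.
by move/pcharf0P: ch => ->; move/eqP.
Qed.

Lemma cm_V {K : fieldType} {n} (m : lmap K) : (1 < n)%N -> is_coalg_morph n m ->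
  forall M, (forall i j, (i < n)%N -> (j < n)%N -> (0 < j)%N -> (i + j < M)%N -> m i j 1%N = 0) ->
  forall k i j, (k < n)%N -> (i < n)%N -> (j < n)%N -> (0 < j)%N -> ((i + j).+1 < M + k)%N ->
  m i j k = 0.
Proof.
move=> n1 H; have n0 : (0 < n)%N by lia.
move=> M hM; elim=> [|k IH] i j hk hi hj j0 hij.
  rewrite (cm_0 n0 H) //; have -> : (j == 0)%N = false by lia.
  by rewrite andbF.
rewrite (cm_conv n0 H) //; apply: big1 => -[a ha] _; apply: big1 => -[b hb] _ /=.
case: (posnP b) => [b0|b0].
  subst b; case: (posnP a) => [a0|a0]; first by subst a; rewrite (cm_001 n1 H) mul0r.
  rewrite (IH (i - a)%N (j - 0)%N) ?mulr0 //; lia.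
case: (ltnP (a + b) M) => hab; first by rewrite hM ?mul0r //; lia.
rewrite (@cm_deg _ _ m n1 H k (i - a)%N (j - b)%N) ?mulr0 //; lia.
Qed.


Lemma sw_form {K : fieldType} {n} (F : vect K n -> vect K n -> vect K n) (J : 'I_n) k :
  sw (bx K J) F k = \sum_(b1 < n) \sum_(b2 < n) (val b1 + val b2 == val J)%N%:R * F (bx K b1) (bx K b2) k.
Proof. by rewrite ffunE; apply: eq_bigr => b1 _; apply: eq_bigr => b2 _; rewrite comul_bx. Qed.

Lemma app2_bx {K : fieldType} {n} (m m1 m2 : lmap K) (a b c e k : 'I_n) :
  app m (app m1 (bx K a) (bx K b)) (app m2 (bx K c) (bx K e)) k =
  \sum_(x < n) \sum_(l < n) m1 a b x * m2 c e l * m x l k.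
Proof. by rewrite ffunE; apply: eq_bigr => x _; apply: eq_bigr => l _; rewrite !app_bx. Qed.

Lemma app1_bx {K : fieldType} {n} (m m1 : lmap K) (a b e k : 'I_n) :
  app m (app m1 (bx K a) (bx K b)) (bx K e) k =
  \sum_(x < n) m1 a b x * m x e k.
Proof.
rewrite ffunE; apply: eq_bigr => x _; rewrite (sum1o e) => [|l ne]; last by rewrite bxE (negbTE ne) mulr0 mul0r.
by rewrite app_bx bxE eqxx mulr1.
Qed.

Lemma collapse0 {K : fieldType} {n} (h : (0 < n)%N) (G : 'I_n -> 'I_n -> K) :
  \sum_(b1 < n) \sum_(b2 < n) (val b1 + val b2 == 0)%N%:R * G b1 b2 = G (Ordinal h) (Ordinal h).
Proof.
rewrite (sum1 h) => [|[b1 hb1] /= ne]; last first.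
  by apply: big1 => -[b2 hb2] _ /=; (have -> : (b1 + b2 == 0)%N = false by lia); rewrite mul0r.
rewrite (sum1 h) /= => [|[b2 hb2] /= ne]; first by rewrite mul1r.
by (have -> : (0 + b2 == 0)%N = false by lia); rewrite mul0r.
Qed.

Lemma reg_lem {K : fieldType} {n} (m1 m2 : lmap K) (n1 : (1 < n)%N) :
  is_coalg_morph n m1 -> is_coalg_morph n m2 ->
  (\sum_(x < n) m1 1%N 0%N x * m2 x 0%N 1%N = 1) -> m1 1%N 0%N 1%N * m2 1%N 0%N 1%N = 1.
Proof.
move=> H1 H2; have n0 : (0 < n)%N by lia.
rewrite (sum1 n1) //= => -[x hx] /= ne.
case: (posnP x) => [x0|x0]; first by rewrite x0 (cm_0 n0 H1) // mul0r.
rewrite (@cm_deg _ _ m1 n1 H1 x 1%N 0%N) ?mul0r //; lia.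
Qed.

Definition PM {K : fieldType} (n : nat) (m : lmap K) (M : nat) :=
  forall i j, (i < n)%N -> (j < n)%N -> (0 < j)%N -> (i + j < M)%N -> m i j 1%N = 0.

Lemma lemA {K : fieldType} {n} (m1 m2 m3 : lmap K) (n1 : (1 < n)%N) M I J (hI : (I < n)%N) (hJ : (J < n)%N) :
  is_coalg_morph n m1 -> is_coalg_morph n m2 -> is_coalg_morph n m3 ->
  PM n m1 M -> PM n m2 M -> PM n m3 M -> (I + J = M)%N -> (0 < J)%N -> (2 <= M)%N ->
  \sum_(b1 < n) \sum_(b2 < n) (val b1 + val b2 == J)%N%:R *
     \sum_(x < n) \sum_(l < n) m1 I b1 x * m2 0%N b2 l * m3 x l 1%N
  = m1 I J 1%N * m3 1%N 0%N 1%N.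
Proof.
move=> H1 H2 H3 P1 P2 P3 hM J0 M2; have n0 : (0 < n)%N by lia.
rewrite (sum1 hJ) => [|[b1 hb1] /= ne]; last first.
  apply: big1 => -[b2 hb2] _ /=.
  case: (boolP (b1 + b2 == J)%N) => e; last by rewrite mul0r.
  rewrite mul1r; apply: big1 => -[x hx] _; apply: big1 => -[l hl] _ /=.
  case: (posnP l) => [l0|l0].
    by subst l; rewrite (cm_0 n0 H2) //; (have -> : (b2 == 0)%N = false by lia); rewrite mulr0 mul0r.
  case: (ltnP (x + l) M) => hxl; first by rewrite P3 ?mulr0.
  case: (ltnP (I + b1) x) => hx2.
    by rewrite (@cm_deg _ _ m1 n1 H1 x I b1) ?mul0r.
  rewrite (@cm_V _ _ m2 n1 H2 M P2 l 0%N b2) ?mulr0 ?mul0r //; lia.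
rewrite (sum1 n0) /= => [|[b2 hb2] /= ne]; last first.
  by (have -> : (J + b2 == J)%N = false by lia); rewrite mul0r.
rewrite addn0 eqxx mul1r (sum1 n1) /= => [|[x hx] /= ne]; last first.
  apply: big1 => -[l hl] _ /=.
  case: (posnP l) => [l0|l0]; last by rewrite (@cm_deg _ _ m2 n1 H2 l 0%N 0%N) ?mulr0 ?mul0r.
  subst l; case: (posnP x) => [x0|x0].
    by rewrite x0 (cm_0 n0 H1) //; (have -> : (J == 0)%N = false by lia); rewrite andbF !mul0r.
  by rewrite (@cm_V _ _ m1 n1 H1 M P1 x I J) ?mul0r //; lia.
rewrite (sum1 n0) /= => [|[l hl] /= ne]; last first.
  by rewrite (@cm_deg _ _ m2 n1 H2 l 0%N 0%N) ?mulr0 ?mul0r //; lia.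
by rewrite (cm_0 n0 H2) // mulr1.
Qed.

Lemma lemB {K : fieldType} {n} (m1 m2 m3 : lmap K) (n1 : (1 < n)%N) M I J (hI : (I < n)%N) (hJ : (J < n)%N) :
  is_coalg_morph n m1 -> is_coalg_morph n m2 -> is_coalg_morph n m3 ->
  PM n m3 M -> (I + J = M)%N -> (0 < J)%N ->
  \sum_(x < n) \sum_(l < n) m1 I 0%N x * m2 J 0%N l * m3 x l 1%N
  = m1 I 0%N I * m2 J 0%N J * m3 I J 1%N.
Proof.
move=> H1 H2 H3 P3 hM J0; have n0 : (0 < n)%N by lia.
have m20 : m2 J 0%N 0%N = 0.
  by rewrite (cm_0 n0 H2) //; (have -> : (J == 0)%N = false by lia).
rewrite (sum1 hI) => [|[x hx] /= ne]; last first.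
  apply: big1 => -[l hl] _ /=.
  case: (posnP l) => [l0|l0]; first by subst l; rewrite m20 mulr0 mul0r.
  case: (ltnP (x + l) M) => hxl; first by rewrite P3 ?mulr0.
  case: (ltnP I x) => hx2; first by rewrite (@cm_deg _ _ m1 n1 H1 x I 0%N) ?mul0r //; lia.
  by rewrite (@cm_deg _ _ m2 n1 H2 l J 0%N) ?mulr0 ?mul0r //; lia.
rewrite (sum1 hJ) /= => [//|[l hl] /= ne].
case: (posnP l) => [l0|l0]; first by rewrite l0 m20 mulr0 mul0r.
case: (ltnP (I + l) M) => hxl; first by rewrite P3 ?mulr0.
by rewrite (@cm_deg _ _ m2 n1 H2 l J 0%N) ?mulr0 ?mul0r //; lia.
Qed.


Lemma key_lem {K : fieldType} (X q : K) i j : (0 < i + j)%N ->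
  X * q = q ^+ i * q ^+ j * X -> q != 0 -> q ^+ (i + j).-1 != 1 -> X = 0.
Proof.
move=> hij e q0 qr.
have : X * (q * (1 - q ^+ (i + j).-1)) = 0.
  rewrite mulrBr mulr1 -exprS prednK // mulrBr e exprD; ring.
move/eqP; rewrite !mulf_eq0 (negbTE q0) subr_eq0 [1 == _]eq_sym (negbTE qr) orbF /=.
by rewrite orbF => /eqP.
Qed.

Lemma sum_x_split {K : fieldType} {n} (m1 m3 : lmap K) (n1 : (1 < n)%N) i :
  is_coalg_morph n m1 -> (0 < i)%N -> (i < n)%N ->
  \sum_(x < n) m1 i 0%N x * m3 x 0%N 1%N = \sum_(1 <= h < i.+1) m1 i 0%N h * m3 h 0%N 1%N.
Proof.
move=> H1 i0 hi; have n0 : (0 < n)%N by lia.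
rewrite -(big_mkord xpredT (fun x => m1 i 0%N x * m3 x 0%N 1%N)).
rewrite (@big_cat_nat _ _ _ i.+1 0 n _ _ (leq0n _) hi).
rewrite [X in _ + X = _]big_nat_cond [X in _ + X = _]big1 ?addr0; last first.
  move=> x /andP[/andP[h1 h2] _]; rewrite (@cm_deg _ _ m1 n1 H1 x i 0%N) ?mul0r //; lia.
rewrite big_ltn // (cm_0 n0 H1) //; (have -> : (i == 0)%N = false by lia).
by rewrite /= mul0r add0r.
Qed.

Lemma sum_l0 {K : fieldType} {n} (m1 m2 m3 : lmap K) (n1 : (1 < n)%N) i :
  is_coalg_morph n m2 ->
  \sum_(x < n) \sum_(l < n) m1 i 0%N x * m2 0%N 0%N l * m3 x l 1%N
  = \sum_(x < n) m1 i 0%N x * m3 x 0%N 1%N.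
Proof.
move=> H2; have n0 : (0 < n)%N by lia.
apply: eq_bigr => x _; rewrite (sum1 n0) /= => [|[l hl] /= ne].
  by rewrite (cm_0 n0 H2) // mulr1.
by rewrite (@cm_deg _ _ m2 n1 H2 l 0%N 0%N) ?mulr0 ?mul0r //; lia.
Qed.

Unset Implicit Arguments.

Theorem theorem6p1 (K : closedFieldType) (n : nat) (p d : lmap K) (s : nat) :
  [pchar K] =i pred0 -> (1 < n)%N ->
  regular_qcycle n p d ->
  (1 <= s)%N ->
  (forall r : nat, (0 < r < s)%N -> (p 1%N 0%N 1%N) ^+ r != 1) ->
  (forall i j k : nat, (i < n)%N -> (j < n)%N -> (k < n)%N ->
     i != 0%N -> j != 0%N -> (i + j <= s)%N ->
     p i j k = 0 /\ d i j k = 0) /\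
  (forall i : nat, (1 < i)%N -> (i <= s)%N -> (i < n)%N ->
     p 1 0 1 - p i 0 i != 0 /\
     d i 0 1 * (p 1 0 1 - p i 0 i) =
       \sum_(1 <= h < i) p i 0 h * d h 0 1
       - \sum_(2 <= h < i.+1) d i 0 h * p h 0 1).
Proof.
move=> ch n1 [[Hp [Hd [up [lo [Hup [Hlo Hreg]]]]]] Hcyc] s1 hq.
have n0 : (0 < n)%N by lia.
pose o0 : 'I_n := Ordinal n0.
pose o1 : 'I_n := Ordinal n1.
have one1 : forall (m : lmap K), (escal (bx K o0) (bx K o1)) o1 = 1.
  by move=> _; rewrite ffunE eps_bx bxE !eqxx mulr1.
have q0 : p 1%N 0%N 1%N != 0.
  have [h1 _ _ _] := Hreg (bx K o1) (bx K o0).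
  have := congr1 (fun f : vect K n => f o1) h1.
  rewrite sw_form /= (collapse0 n0) app1_bx /= (one1 p) => e.
  have := reg_lem n1 Hup Hp e.
  by move=> E; apply/eqP => h; move: E; rewrite h mulr0 => /eqP; rewrite eq_sym oner_eq0.
have t0 : d 1%N 0%N 1%N != 0.
  have [_ _ h3 _] := Hreg (bx K o1) (bx K o0).
  have := congr1 (fun f : vect K n => f o1) h3.
  rewrite sw_form /= (collapse0 n0) app1_bx /= (one1 p) => e.
  have := reg_lem n1 Hd Hlo e.
  by move=> E; apply/eqP => h; move: E; rewrite h mul0r => /eqP; rewrite eq_sym oner_eq0.
have E1 : forall I J (hI : (I < n)%N) (hJ : (J < n)%N),
    \sum_(b1 < n) \sum_(b2 < n) (val b1 + val b2 == J)%N%:R *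
      \sum_(x < n) \sum_(l < n) p I b1 x * d 0%N b2 l * p x l 1%N
    = \sum_(x < n) \sum_(l < n) p I 0%N x * p J 0%N l * p x l 1%N.
  move=> I J hI hJ.
  have [c1 _ _] := Hcyc (bx K (Ordinal hI)) (bx K (Ordinal hJ)) (bx K o0).
  have := congr1 (fun f : vect K n => f o1) c1.
  rewrite !sw_form /= (collapse0 n0) app2_bx /=.
  under eq_bigr do under eq_bigr do rewrite app2_bx.
  by [].
have E2 : forall I J (hI : (I < n)%N) (hJ : (J < n)%N),
    \sum_(x < n) \sum_(l < n) p I 0%N x * p J 0%N l * d x l 1%N
    = \sum_(b1 < n) \sum_(b2 < n) (val b1 + val b2 == J)%N%:R *
      \sum_(x < n) \sum_(l < n) d I b1 x * d 0%N b2 l * p x l 1%N.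
  move=> I J hI hJ.
  have [_ c2 _] := Hcyc (bx K (Ordinal hI)) (bx K o0) (bx K (Ordinal hJ)).
  have := congr1 (fun f : vect K n => f o1) c2.
  rewrite !sw_form /= (collapse0 n0) app2_bx /=.
  move=> ->.
  under eq_bigr do under eq_bigr do rewrite app2_bx.
  rewrite exchange_big /=.
  by apply: eq_bigr => b1 _; apply: eq_bigr => b2 _; rewrite addnC.
have al : p 0%N 1%N 1%N = 0 by apply: (cm_nil ch n1 Hp q0).
have be : d 0%N 1%N 1%N = 0 by apply: (cm_nil ch n1 Hd t0).
have PMall : forall M, (M <= s.+1)%N -> PM n p M /\ PM n d M.
  elim=> [|M IH] hM; first by split => i j _ _ j0 h; lia.
  have [Pp Pd] := IH (ltnW hM).
  case: (ltnP M 2) => M2.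
    split => i j hi hj j0 hij; (case: (ltnP (i + j) M) => h; first by [apply: Pp | apply: Pd]);
    (have -> : i = 0%N by lia); (have -> : j = 1%N by lia); done.
  have Ms : (M <= s)%N by lia.
  have qr : p 1%N 0%N 1%N ^+ M.-1 != 1 by apply: hq; lia.
  split => i j hi hj j0 hij; case: (ltnP (i + j) M) => h.
  - by apply: Pp.
  - have hM' : (i + j = M)%N by lia.
    have := E1 i j hi hj.
    rewrite (lemA n1 hi hj Hp Hd Hp Pp Pd Pp hM' j0 M2).
    rewrite (lemB n1 hi hj Hp Hp Hp Pp hM' j0) (cm_diag n1 Hp hi) (cm_diag n1 Hp hj) => e.
    by apply: (key_lem _ e q0); [lia | rewrite hM'].
  - by apply: Pd.
  - have hM' : (i + j = M)%N by lia.
    have := E2 i j hi hj.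
    rewrite (lemA n1 hi hj Hd Hd Hp Pd Pd Pp hM' j0 M2).
    rewrite (lemB n1 hi hj Hp Hp Hd Pd hM' j0) (cm_diag n1 Hp hi) (cm_diag n1 Hp hj) => e.
    by apply: (key_lem _ (esym e) q0); [lia | rewrite hM'].
have [Pp Pd] := PMall s.+1 (leqnn _).
split.
  move=> i j k hi hj hk i0 j0 hij.
  case: (posnP k) => [k0|k0].
    subst k; rewrite (cm_0 n0 Hp) // (cm_0 n0 Hd) // (negbTE i0) /=; done.
  by rewrite (cm_V n1 Hp Pp) ?(cm_V n1 Hd Pd) //; lia.
move=> i i1 hs hi.
have qi : p 1%N 0%N 1%N - p i 0%N i != 0.
  rewrite (cm_diag n1 Hp hi).
  have -> : i = (i.-1).+1 by lia.
  rewrite exprS -{1}[p 1%N 0%N 1%N]mulr1 -mulrBr mulf_neq0 // subr_eq0 eq_sym.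
  by apply: hq; lia.
split => //.
have := E2 i 0%N hi n0.
rewrite (collapse0 n0) /= (sum_l0 _ _ n1) // (sum_l0 _ _ n1) //.
rewrite (sum_x_split _ n1 Hp) ?(sum_x_split _ n1 Hd); try lia.
rewrite big_nat_recr /=; last by lia.
rewrite [in RHS]big_ltn /=; last by lia.
set S1 := \sum_(1 <= _ < i) _; set S2 := \sum_(2 <= _ < i.+1) _ => e.
have -> : S1 = d i 0%N 1%N * p 1%N 0%N 1%N + S2 - p i 0%N i * d i 0%N 1%N by rewrite -e addrK.
ring.
Qed.
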